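(* Let $G$ and $H$ be abelian groups, let $T \subset G$ be a tile, and let $\rho : G \to H$ be a surjective homomorphism that is injective on $T$. Let $k,\ell \ge 0$ be integers. If $G^k\times H^\ell$ is $(T^{\times k}, \rho(T)^{\times \ell})$-tilable, then $G^{k+\ell}$ is $T$-tilable.
   Context: A tile in an abelian group is a non-empty subset. Given abelian groups $K_1,\dots,K_r$ and tiles $V_j\subset K_j$, let $\mathsf{V}_j \subset K_1\times\dots\times K_r$ be the set of points whose $j$-th coordinate lies in $V_j$ and whose other coordinates are $0$. A copy of $V_j$ is a translate $\mathsf{V}_j + x$ with $x \in K_1\times\dots\times K_r$. A subset of $K_1\times\dots\times K_r$ is $(V_1,\dots,V_r)$-tilable if it is a disjoint union of copies of $V_1,\dots,V_r$. The notation $V^{\times e}$ stands for $e$ consecutive entries $V,\dots,V$, and ''$T$-tilable'' for a subset of $G^{e}$ means $(T^{\times e})$-tilable. *)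

(* Defs.v *)
(* abelian groups are zmodType's. *)
From HB Require Import structures.
From mathcomp Require Import all_boot all_order all_algebra.
Set Implicit Arguments. Unset Strict Implicit. Unset Printing Implicit Defensive.
Import GRing.Theory.
Local Open Scope ring_scope.

Definition point (I : Type) (K : I -> zmodType) := forall i : I, K i.

Definition copy (I : Type) (K : I -> zmodType) (V : forall j : I, K j -> Prop)
  (j : I) (x : point K) : point K -> Prop :=
  fun p => V j (p j - x j) /\ (forall i : I, i <> j -> p i = x i).

Definition is_tiling (I : Type) (K : I -> zmodType) (V : forall j : I, K j -> Prop)
  (S : point K -> Prop) (C : (point K -> Prop) -> Prop) : Prop :=
  (forall c, C c -> exists (j : I) (x : point K), forall p, c p <-> copy V j x p) /\
  (forall c1 c2, C c1 -> C c2 -> c1 <> c2 -> forall p, ~ (c1 p /\ c2 p)) /\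
  (forall p, S p <-> exists c, C c /\ c p).

Definition tilable (I : Type) (K : I -> zmodType) (V : forall j : I, K j -> Prop)
  (S : point K -> Prop) : Prop :=
  exists C, is_tiling V S C.

Definition GH_factors (G H : zmodType) (k l : nat) : 'I_k + 'I_l -> zmodType :=
  fun i => match i with inl _ => G | inr _ => H end.

Definition GH_tiles (G H : zmodType) (k l : nat) (T : G -> Prop) (U : H -> Prop) :
  forall i : 'I_k + 'I_l, @GH_factors G H k l i -> Prop :=
  fun i => match i as i0 return @GH_factors G H k l i0 -> Prop with
           | inl _ => T | inr _ => U end.

Definition image_set (G H : Type) (f : G -> H) (T : G -> Prop) : H -> Prop :=
  fun h => exists t, T t /\ f t = h.
Arguments GH_tiles {G H} k l T U.

(* Main.v *)
Require Import Defs.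
From HB Require Import structures.
From mathcomp Require Import all_boot all_order all_algebra.
From Stdlib Require Import ClassicalEpsilon FunctionalExtensionality PropExtensionality Classical.
Set Implicit Arguments. Unset Strict Implicit.
Import GRing.Theory.
Local Open Scope ring_scope.

Section Pull.
Variables (G H : zmodType) (T : G -> Prop) (rho : {additive G -> H}) (k l : nat).
Hypothesis rho_inj : forall a b : G, T a -> T b -> rho a = rho b -> a = b.
Let I := ('I_k + 'I_l)%type.
Let K := @GH_factors G H k l.
Let V := GH_tiles k l T (image_set rho T).
Variable C : (point K -> Prop) -> Prop.
Hypothesis hC : is_tiling V (fun _ => True) C.
Variable inh : inhabited (I * point K).

Definition pi (p : point (fun _ : 'I_(k + l) => G)) : point K :=
  fun i0 => match i0 as i1 return K i1 with
            | inl a => p (unsplit (inl a)) | inr b => rho (p (unsplit (inr b))) end.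

Definition c0 (u : point K) : point K -> Prop :=
  epsilon (inhabits (fun _ => False)) (fun c => C c /\ c u).
Definition par (c : point K -> Prop) : I * point K :=
  epsilon inh (fun jy => forall r, c r <-> copy V jy.1 jy.2 r).

Lemma c0_spec u : C (c0 u) /\ c0 u u.
Proof.
have [_ [_ cov]] := hC. have [c [Cc cu]] := proj1 (cov u) Logic.I.
exact: (@epsilon_spec _ (inhabits (fun _ => False)) (fun c => C c /\ c u) (ex_intro _ c (conj Cc cu))).
Qed.

Lemma c0_eq u v : c0 u v -> c0 v = c0 u.
Proof.
move=> huv; have [Cu _] := c0_spec u; have [Cv vv] := c0_spec v.
apply: NNPP => ne. have [_ [hd _]] := hC. exact: (hd _ _ Cv Cu ne v).
Qed.

Lemma par_spec u : forall r, c0 u r <-> copy V (par (c0 u)).1 (par (c0 u)).2 r.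
Proof.
have [Cu _] := c0_spec u. have [hc _] := hC. have [j [x hx]] := hc _ Cu.
have := @epsilon_spec _ inh (fun jy : I * point K => forall r, c0 u r <-> copy V jy.1 jy.2 r).
apply. by exists (j, x).
Qed.

Definition dir (p : point (fun _ : 'I_(k + l) => G)) : 'I_(k + l) :=
  unsplit (par (c0 (pi p))).1.

Definition tp (p : point (fun _ : 'I_(k + l) => G)) (b : 'I_l) : G :=
  epsilon (inhabits 0) (fun t => T t /\
     rho t = rho (p (unsplit (inr b))) - (par (c0 (pi p))).2 (inr b)).

Definition anchor (p : point (fun _ : 'I_(k + l) => G)) : G :=
  match (par (c0 (pi p))).1 with
  | inl a => (par (c0 (pi p))).2 (inl a)
  | inr b => p (unsplit (inr b)) - tp p b end.

Definition tile (p q : point (fun _ : 'I_(k + l) => G)) : Prop :=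
  T (q (dir p) - anchor p) /\ forall i, i <> dir p -> q i = p i.


Lemma pi_off p q j0 : (forall i, i <> unsplit j0 -> q i = p i) ->
  forall i0, i0 <> j0 -> pi q i0 = pi p i0.
Proof.
move=> h [a|b] ne /=; rewrite h // => E; apply: ne; exact: (can_inj unsplitK).
Qed.

Lemma tile_pi p q : tile p q -> c0 (pi p) (pi q).
Proof.
move=> tpq.
have [_ pp] := c0_spec (pi p).
apply: (proj2 (par_spec (pi p) (pi q))).
have := proj1 (par_spec (pi p) (pi p)) pp.
move: tpq; rewrite /tile /dir /anchor /tp.
case E: (par (c0 (pi p))) => [j0 y].
move: E => _.
move=> /= [hT hoff] [hV hy]; split; last first.
  by move=> i ne; rewrite (pi_off hoff ne); exact: hy.
case: j0 hT hoff hV {hy} => [a|b] /= hT _ hV //.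
set t := epsilon _ _ in hT *.
have [Tt rt] : T t /\ rho t = rho (p (unsplit (inr b))) - y (inr b).
  exact: (@epsilon_spec _ (inhabits 0) (fun t : G =>
            T t /\ rho t = rho (p (unsplit (inr b))) - y (inr b)) hV).
exists (q (rshift k b) - (p (rshift k b) - t)); split => //.
by rewrite !raddfB rt opprK addKr.
Qed.

Lemma tile_refl p : tile p p.
Proof.
have [_ pp] := c0_spec (pi p).
have := proj1 (par_spec (pi p) (pi p)) pp.
rewrite /tile /dir /anchor /tp.
case E: (par (c0 (pi p))) => [j0 y]; move: E => _.
move=> [hV _]; split => //.
case: j0 hV => [a|b] /= hV //.
set t := epsilon _ _.
have [Tt rt] : T t /\ rho t = rho (p (unsplit (inr b))) - y (inr b).
  exact: (@epsilon_spec _ (inhabits 0) (fun t : G =>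
            T t /\ rho t = rho (p (unsplit (inr b))) - y (inr b)) hV).
by rewrite opprB addrC subrK.
Qed.

Lemma tile_same p q : tile p q -> dir q = dir p /\ anchor q = anchor p.
Proof.
move=> tpq; have hc := c0_eq (tile_pi tpq).
have [_ qq] := c0_spec (pi q).
have [_ pp] := c0_spec (pi p).
have := proj1 (par_spec (pi p) (pi p)) pp.
have := proj1 (par_spec (pi q) (pi q)) qq.
move: tpq; rewrite /tile /dir /anchor /tp hc.
case E: (par (c0 (pi p))) => [j0 y]; move: E => _.
case: j0 => [a|b] /= [hT hoff] [hV _] [hVp _]; split => //.
set tp := epsilon _ (fun t => _ /\ _ = rho (p _) - _) in hT *.
set tq := epsilon _ (fun t => _ /\ _ = rho (q _) - _).
have [Ttp rtp] : T tp /\ rho tp = rho (p (unsplit (inr b))) - y (inr b).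
  exact: (@epsilon_spec _ (inhabits 0) (fun t : G =>
            T t /\ rho t = rho (p (unsplit (inr b))) - y (inr b)) hVp).
have [Ttq rtq] : T tq /\ rho tq = rho (q (unsplit (inr b))) - y (inr b).
  exact: (@epsilon_spec _ (inhabits 0) (fun t : G =>
            T t /\ rho t = rho (q (unsplit (inr b))) - y (inr b)) hV).
have -> : tq = q (rshift k b) - (p (rshift k b) - tp).
  apply: rho_inj => //.
  by rewrite rtq !raddfB rtp opprK addKr.
by rewrite opprB addrC subrK.
Qed.

Lemma tile_trans p q : tile p q -> forall r, tile q r <-> tile p r.
Proof.
move=> tpq r; have [hd ha] := tile_same tpq.
have [_ hoff] := tpq.
rewrite /tile hd ha; split => -[h1 h2]; split => // i ne.
  by rewrite h2 // hoff.
by rewrite h2 // hoff.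
Qed.

End Pull.

Theorem corollary18 (G H : zmodType) (T : G -> Prop) (rho : {additive G -> H})
  (k l : nat)
  (hT : exists t, T t)
  (rho_surj : forall h : H, exists g : G, rho g = h)
  (rho_inj : forall a b : G, T a -> T b -> rho a = rho b -> a = b)
  (htil : tilable (GH_tiles k l T (image_set rho T)) (fun _ => True)) :
  tilable (I := 'I_(k + l)) (K := fun _ => G) (fun _ => T) (fun _ => True).
Proof.
have [C hC] := htil.
have inh : inhabited (('I_k + 'I_l) * point (@GH_factors G H k l)).
  have [hc [_ cov]] := hC.
  have [c [Cc _]] := proj1 (cov (fun i => 0)) Logic.I.
  have [j [x _]] := hc _ Cc.
  exact: inhabits (j, x).
exists (fun c => exists p, c = tile T rho C inh p).
split; [|split].
- move=> c [p ->]; exists (dir T rho C inh p).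
  exists (fun i => if i == dir T rho C inh p then anchor T rho C inh p else p i).
  move=> r; rewrite /copy /tile eqxx; split => -[h1 h2]; split => // i ne.
    by rewrite h2 // (introF eqP ne).
  by rewrite h2 // (introF eqP ne).
- move=> c1 c2 [p1 ->] [p2 ->] ne r [h1 h2]; apply: ne.
  apply: functional_extensionality => s; apply: propositional_extensionality.
  rewrite -(tile_trans rho_inj hC h1) (tile_trans rho_inj hC h2) //.
- move=> p; split=> // _; exists (tile T rho C inh p); split; first by exists p.
  exact: (tile_refl hC).
Qed.
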